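(* Let $G$ be a finitely generated torsion-free nilpotent group and suppose the decomposition $\overline{G}=R_1\times R_2$ into rational subgroups matches the decomposition $G=G_1\times G_2$. Then $\overline{G}=R_1\times R_2$ gives rise to a decomposition of $G/Z(G)$; that is, with $X_i=R_iZ(\overline{G})\cap G$, we have $G=X_1X_2$, $[X_1,X_2]=1$ and $X_1\cap X_2=Z(G)$.
   Context: $\overline{G}$ is the rational closure of $G$ (torsion-free nilpotent, containing $G$, uniquely divisible, each element has a positive power in $G$); for $H\le G$, $\overline{H}$ is the set of elements of $\overline{G}$ having a positive power in $H$. A subgroup is rational if closed under taking all $n$-th roots. A decomposition $\overline{G}=R_1\times R_2$ matches $G=G_1\times G_2$ if $\overline{G_i}\,Z(\overline{G})=R_i\,Z(\overline{G})$ for $i=1,2$. *)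

(* Defs.v *)
From Stdlib Require Import List Arith.

Record group := Group {
  car :> Type;
  mul : car -> car -> car;
  inv : car -> car;
  one : car;
  mulA : forall x y z, mul x (mul y z) = mul (mul x y) z;
  mul1g : forall x, mul one x = x;
  mulVg : forall x, mul (inv x) x = one
}.

Arguments mul {g}.
Arguments inv {g}.
Arguments one {g}.

Section GroupDefs.
Variable T : group.

Definition gset := T -> Prop.

Definition seteq (A B : gset) : Prop := forall x, A x <-> B x.
Definition subset (A B : gset) : Prop := forall x, A x -> B x.

Definition is_subgroup (H : gset) : Prop :=
  H one /\ (forall x y, H x -> H y -> H (mul x y)) /\ (forall x, H x -> H (inv x)).

Fixpoint gpow (x : T) (n : nat) : T :=
  match n with 0 => one | S k => mul (gpow x k) x end.

Definition comm (x y : T) : T := mul (mul (mul (inv x) (inv y)) x) y.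

Definition generated (S : gset) : gset :=
  fun x => forall K, is_subgroup K -> subset S K -> K x.

Definition prodset (A B : gset) : gset :=
  fun x => exists a b, A a /\ B b /\ x = mul a b.

Definition setI (A B : gset) : gset := fun x => A x /\ B x.

Definition center (H : gset) : gset :=
  fun z => H z /\ forall h, H h -> mul z h = mul h z.

Definition setT : gset := fun _ => True.

Definition fin_gen (H : gset) : Prop :=
  exists l : list T, seteq H (generated (fun x => In x l)).

Fixpoint lcs (H : gset) (n : nat) : gset :=
  match n with
  | 0 => H
  | S k => generated (fun z => exists x y, lcs H k x /\ H y /\ z = comm x y)
  end.
(* lcs H 0 = gamma_1(H); lcs H c = gamma_{c+1}(H) *)

Definition nilpotent (H : gset) : Prop :=
  exists c, forall x, lcs H c x -> x = one.

Definition torsion_free (H : gset) : Prop :=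
  forall x n, H x -> 0 < n -> gpow x n = one -> x = one.

Definition uniquely_divisible (H : gset) : Prop :=
  forall x n, H x -> 0 < n -> exists y, H y /\ gpow y n = x /\
     (forall y', H y' -> gpow y' n = x -> y' = y).

(* Gbar (the whole ambient group T) is the rational closure of G *)
Definition rational_closure_of (G : gset) : Prop :=
  is_subgroup G /\ torsion_free setT /\ nilpotent setT /\
  uniquely_divisible setT /\
  (forall x, exists n, 0 < n /\ G (gpow x n)).

Definition closure (H : gset) : gset :=
  fun x => exists n, 0 < n /\ H (gpow x n).

Definition rational (R : gset) : Prop :=
  is_subgroup R /\ forall x n, 0 < n -> R (gpow x n) -> R x.

Definition direct_prod (A B C : gset) : Prop :=
  is_subgroup B /\ is_subgroup C /\ subset B A /\ subset C A /\
  (forall a, A a -> exists b c, B b /\ C c /\ a = mul b c) /\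
  (forall b c, B b -> C c -> mul b c = mul c b) /\
  (forall x, B x -> C x -> x = one).

Definition matches (R1 R2 G1 G2 : gset) : Prop :=
  seteq (prodset (closure G1) (center setT)) (prodset R1 (center setT)) /\
  seteq (prodset (closure G2) (center setT)) (prodset R2 (center setT)).

End GroupDefs.

Arguments seteq {T}. Arguments subset {T}. Arguments is_subgroup {T}.
Arguments gpow {T}. Arguments comm {T}. Arguments generated {T}.
Arguments prodset {T}. Arguments setI {T}. Arguments center {T}.
Arguments setT {T}. Arguments fin_gen {T}. Arguments lcs {T}.
Arguments nilpotent {T}. Arguments torsion_free {T}.
Arguments uniquely_divisible {T}. Arguments rational_closure_of {T}.
Arguments closure {T}. Arguments rational {T}. Arguments direct_prod {T}.
Arguments matches {T}.

(* Main.v *)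
Require Import Defs.
From Stdlib Require Import List Arith.

Section L.
Variable T : group.

Lemma mulgV (x : T) : mul x (inv x) = one.
Proof.
  rewrite <- (mul1g T (mul x (inv x))).
  rewrite <- (mulVg T (inv x)) at 1.
  rewrite <- mulA. rewrite (mulA T (inv x) x (inv x)). rewrite mulVg, mul1g.
  apply mulVg.
Qed.

Lemma mulg1 (x : T) : mul x one = x.
Proof. rewrite <- (mulVg T x), mulA, mulgV. apply mul1g. Qed.

Lemma comm_one (x y : T) : mul x y = mul y x -> comm x y = one.
Proof.
  intro H. unfold comm. rewrite <- (mulA T _ x y), H.
  rewrite <- (mulA T (inv x)), (mulA T (inv y) y x), mulVg, mul1g. apply mulVg.
Qed.

Lemma comm_mul (a b y : T) : mul a y = mul y a -> mul b y = mul y b ->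
  mul (mul a b) y = mul y (mul a b).
Proof.
  intros Ha Hb. rewrite <- mulA, Hb, mulA, Ha, <- mulA. reflexivity.
Qed.

Lemma gpow_conj (z t : T) n :
  gpow (mul (mul z t) (inv z)) n = mul (mul z (gpow t n)) (inv z).
Proof.
  induction n as [|k IH]; simpl.
  - rewrite mulg1, mulgV. reflexivity.
  - rewrite IH.
    rewrite <- (mulA T (mul z (gpow t k))).
    rewrite (mulA T (inv z) (mul z t) (inv z)).
    rewrite (mulA T (inv z) z t), mulVg, mul1g.
    rewrite (mulA T (mul z (gpow t k)) t (inv z)).
    rewrite <- (mulA T z (gpow t k) t). reflexivity.
Qed.

Lemma rcancel (a b c : T) : mul a c = mul b c -> a = b.
Proof.
  intro H. rewrite <- (mulg1 a), <- (mulg1 b), <- (mulgV c), !mulA, H. reflexivity.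
Qed.

End L.

Theorem mainTheorem12 (T : group) (G G1 G2 R1 R2 : T -> Prop) :
  is_subgroup G -> fin_gen G -> torsion_free G -> nilpotent G ->
  rational_closure_of G ->
  rational R1 -> rational R2 ->
  direct_prod setT R1 R2 ->
  direct_prod G G1 G2 ->
  matches R1 R2 G1 G2 ->
  let X1 := setI (prodset R1 (center setT)) G in
  let X2 := setI (prodset R2 (center setT)) G in
  seteq G (prodset X1 X2) /\
  (forall x1 x2, X1 x1 -> X2 x2 -> comm x1 x2 = one) /\
  seteq (setI X1 X2) (center G).
Proof.
  intros HG _ _ _ [_ [_ [_ [Hdiv Hpow]]]] [HR1 _] [HR2 _]
    [_ [_ [_ [_ [_ [HRc _]]]]]] [_ [_ [HG1 [HG2 [Hdec _]]]]] [M1 M2] X1 X2.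
  assert (Hc : forall x1 x2, prodset R1 (center setT) x1 ->
             prodset R2 (center setT) x2 -> mul x1 x2 = mul x2 x1).
  { intros x1 x2 [r1 [z1 [Hr1 [[_ Hz1] E1]]]] [r2 [z2 [Hr2 [[_ Hz2] E2]]]].
    subst x1. apply comm_mul.
    - subst x2. symmetry. apply comm_mul.
      + symmetry. apply HRc; assumption.
      + apply Hz2. exact I.
    - apply Hz1. exact I. }
  assert (P1 : seteq G (prodset X1 X2)).
  { intro g; split.
    - intro Hg. destruct (Hdec g Hg) as [a [b [Ha [Hb E]]]].
      exists a, b. split; [|split; [|exact E]].
      + split; [|apply HG1; exact Ha].
        apply (proj1 (M1 a)). exists a, one. split.
        * exists 1. split; [auto|]. simpl. rewrite mul1g. exact Ha.
        * split; [split; [exact I| intros h _; rewrite mul1g, mulg1; reflexivity]|].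
          symmetry; apply mulg1.
      + split; [|apply HG2; exact Hb].
        apply (proj1 (M2 b)). exists b, one. split.
        * exists 1. split; [auto|]. simpl. rewrite mul1g. exact Hb.
        * split; [split; [exact I| intros h _; rewrite mul1g, mulg1; reflexivity]|].
          symmetry; apply mulg1.
    - intros [a [b [[_ Ha] [[_ Hb] E]]]]. subst g.
      destruct HG as [_ [HGm _]]. apply HGm; assumption. }
  split; [exact P1|]. split.
  { intros x1 x2 [H1 _] [H2 _]. apply comm_one. apply Hc; assumption. }
  intro x; split.
  - intros [[Hx1 Gx] [Hx2 _]]. split; [exact Gx|].
    intros h Hh. destruct (proj1 (P1 h) Hh) as [a [b [[Ha _] [[Hb _] E]]]].
    subst h. symmetry. apply comm_mul.
    + apply Hc; assumption.
    + symmetry. apply Hc; assumption.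
  - intros [Gx Hx].
    assert (Zx : center setT x).
    { split; [exact I|]. intros t _.
      destruct (Hpow t) as [n [Hn Gt]].
      assert (E : mul (mul x (gpow t n)) (inv x) = gpow t n).
      { rewrite (Hx _ Gt), <- mulA, mulgV, mulg1. reflexivity. }
      destruct (Hdiv (gpow t n) n I Hn) as [y [_ [_ U]]].
      assert (U1 := U t I eq_refl).
      assert (U2 := U (mul (mul x t) (inv x)) I ltac:(rewrite gpow_conj; exact E)).
      rewrite <- U1 in U2.
      apply (rcancel _ _ _ (inv x)). rewrite U2.
      rewrite <- mulA, mulgV, mulg1. reflexivity. }
    assert (HZ : forall R, is_subgroup R -> prodset R (center setT) x).
    { intros R [R1' _]. exists one, x. split; [exact R1'|]. split; [exact Zx|].
      symmetry; apply mul1g. }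
    split; split; try exact Gx; apply HZ; assumption.
Qed.
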